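(* Let $1<k<n-1$ and let $H=(H_{\bm{a},\bm{b}})_{\bm{a},\bm{b}\in\mathcal{A}_k}$ be a $\binom{n}{k}\times\binom{n}{k}$ Hermitian matrix. Then for $i,j\in\{1,\dots,n\}$, $$\pi(H)_{ij}=\frac{1}{k}\sum_{\substack{\bm{l}\in\mathcal{A}_{k-1}\\ \{l_1,\dots,l_{k-1}\}\not\ni i,j}}\mathrm{sgn}(i,\bm{l})\,\mathrm{sgn}(j,\bm{l})\,H_{\mathrm{sr}(i,\bm{l}),\mathrm{sr}(j,\bm{l})},$$ where $(i,\bm{l})$ denotes $(i,l_1,\dots,l_{k-1})$ and the sum is over $\bm{l}$ containing neither $i$ nor $j$.
   Context: $\mathcal{A}_r=\{(a_1,\dots,a_r)\in\{1,\dots,n\}^{\times r}: a_1<\dots<a_r\}$; $\binom{n}{k}\times\binom{n}{k}$ matrices are indexed by $\mathcal{A}_k$ (basis $e_{a_1}\wedge\cdots\wedge e_{a_k}$ of $\wedge^k\mathbb{C}^n$). For $\bm{i}\in\{1,\dots,n\}^{\times k}$: $\mathrm{sgn}(\bm{i})=0$ if the entries of $\bm{i}$ are not all distinct, and otherwise $\mathrm{sgn}(\bm{i})=\mathrm{sgn}(\sigma)$ for the unique $\sigma\in\mathfrak{S}_k$ sorting $\bm{i}$ into increasing order; $\mathrm{sr}(\bm{i})$ is $\bm{i}$ sorted in nondecreasing order. $A$ is the $n^k\times\binom{n}{k}$ matrix with $A_{\bm{i},\bm{a}}=\frac{\mathrm{sgn}(\bm{i})}{\sqrt{k!}}\delta(\mathrm{sr}(\bm{i}),\bm{a})$.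 For an $n^k\times n^k$ matrix $M$, $\pi_1(M)_{i,j}=\sum_{l_1,\dots,l_{k-1}=1}^nM_{(i,l_1,\dots,l_{k-1}),(j,l_1,\dots,l_{k-1})}$, and $\pi(H)=\pi_1(AHA^T)$. *)

(* Defs.v *)
From HB Require Import structures.
From mathcomp Require Import all_boot all_order all_algebra all_fingroup.
Set Implicit Arguments. Unset Strict Implicit. Unset Printing Implicit Defensive.
Import Order.TTheory GRing.Theory Num.Theory.
Local Open Scope ring_scope.

(* Indices {1,...,n} are represented by 'I_n = {0,...,n-1}.
   Multi-indices i in {1..n}^k are k.-tuples of 'I_n. *)

Definition Ak (k n : nat) := {t : k.-tuple 'I_n | sorted ltn (map val t)}.

Definition sr (k n : nat) (t : k.-tuple 'I_n) : k.-tuple 'I_n :=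
  sort_tuple (fun x y : 'I_n => (val x <= val y)%N) t.

(* sgn(i): 0 if entries not distinct; otherwise sign of the unique
   permutation s of 'I_k such that (i_{s 0}, ..., i_{s (k-1)}) is increasing *)
Definition sgn (R : nzRingType) (k n : nat) (t : k.-tuple 'I_n) : R :=
  if uniq t then
    \sum_(s : 'S_k | sorted ltn [seq val (tnth t (s j)) | j <- enum 'I_k])
       (-1) ^+ odd_perm s
  else 0.

Definition Amx (C : numClosedFieldType) (k n : nat)
    (t : k.-tuple 'I_n) (a : Ak k n) : C :=
  sgn C t / sqrtC (k`!)%:R * (sr t == val a)%:R.

Definition cons_t (k n : nat) (i : 'I_n) (l : (k.-1).-tuple 'I_n) : k.-tuple 'I_n :=
  insubd (nseq_tuple k i) (i :: val l).

Definition pi1 (C : numClosedFieldType) (k n : nat)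
    (M : k.-tuple 'I_n -> k.-tuple 'I_n -> C) (i j : 'I_n) : C :=
  \sum_(l : (k.-1).-tuple 'I_n) M (@cons_t k n i l) (@cons_t k n j l).

Definition AHAT (C : numClosedFieldType) (k n : nat) (H : Ak k n -> Ak k n -> C)
    (s t : k.-tuple 'I_n) : C :=
  \sum_(a : Ak k n) \sum_(b : Ak k n) Amx C s a * H a b * Amx C t b.

Definition piH (C : numClosedFieldType) (k n : nat) (H : Ak k n -> Ak k n -> C)
  (i j : 'I_n) : C := pi1 (AHAT H) i j.

Definition is_hermitian (C : numClosedFieldType) (k n : nat) (H : Ak k n -> Ak k n -> C) :=
  forall a b, H b a = (H a b)^*.

(* H_{sr(s), sr(t)}: the entry of H at sr(s), sr(t) (which lie in A_k whenever
   s and t have distinct entries; 0 otherwise, which never happens in the sum) *)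
Definition Hsr (C : numClosedFieldType) (k n : nat) (H : Ak k n -> Ak k n -> C)
    (s t : k.-tuple 'I_n) : C :=
  match @insub _ (fun u : k.-tuple 'I_n => sorted ltn (map val u)) (Ak k n) (sr s),
        @insub _ (fun u : k.-tuple 'I_n => sorted ltn (map val u)) (Ak k n) (sr t) with
  | Some a, Some b => H a b
  | _, _ => 0
  end.

(* Main.v *)
Require Import Defs.
From mathcomp Require Import all_boot all_order all_algebra all_fingroup.
From mathcomp Require Import ring.
Import Order.TTheory GRing.Theory Num.Theory.
Set Implicit Arguments. Unset Strict Implicit. Unset Printing Implicit Defensive.
Local Open Scope ring_scope.

Definition ptup (T : Type) (k : nat) (t : k.-tuple T) (p : 'S_k) : k.-tuple T :=
  [tuple tnth t (p x) | x < k].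

Lemma ptup_perm (T : eqType) k (t : k.-tuple T) p : perm_eq (ptup t p) t.
Proof. by apply/tuple_permP; exists p. Qed.

Lemma sr_perm k n (s t : k.-tuple 'I_n) : perm_eq s t -> sr s = sr t.
Proof.
move=> pst; apply: val_inj => /=; apply/perm_sortP => //.
- by move=> x y; exact: leq_total.
- by move=> y x z; exact: leq_trans.
- by move=> x y /andP[a b]; apply: val_inj; apply/eqP; rewrite eqn_leq a b.
Qed.

Lemma sgn_perm (R : nzRingType) k n (t : k.-tuple 'I_n) (p : 'S_k) :
  sgn R (ptup t p) = (-1) ^+ p * sgn R t.
Proof.
rewrite /sgn (perm_uniq (ptup_perm t p)).
case: (uniq t); last by rewrite mulr0.
rewrite mulr_sumr (reindex_inj (h := fun s => (s * p^-1)%g) (mulIg _)).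
apply: eq_big => s.
  rewrite /ptup; congr sorted; apply: eq_map => x.
  by rewrite tnth_mktuple permM permKV.
move=> _; rewrite odd_permM odd_permV signr_addb.
by case: (odd_perm s); case: (odd_perm p); rewrite ?expr0 ?expr1 ?mul1r ?mulr1.
Qed.

Lemma sum_ind (C : numClosedFieldType) k n (s : k.-tuple 'I_n) (f : Ak k n -> C) :
  \sum_a (sr s == val a)%:R * f a =
  match @insub _ (fun u : k.-tuple 'I_n => sorted ltn (map val u)) (Ak k n) (sr s)
  with Some a => f a | None => 0 end.
Proof.
case: insubP => [u Pu Hu | nP].
  rewrite (bigD1 u) //= -Hu eqxx mul1r big1 ?addr0 // => b nb.
  by rewrite val_eqE eq_sym (negbTE nb) mul0r.
apply: big1 => a _; case: eqP => [e|]; last by rewrite mul0r.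
by move: nP; rewrite e (valP a).
Qed.

Lemma AHATE (C : numClosedFieldType) k n (H : Ak k n -> Ak k n -> C) s t :
  AHAT H s t = sgn C s * sgn C t / (k`!)%:R * Hsr H s t.
Proof.
rewrite /AHAT /Amx.
set q := sqrtC _.
transitivity (sgn C s / q * (sgn C t / q) *
   \sum_a (sr s == val a)%:R * \sum_b (sr t == val b)%:R * H a b).
  rewrite mulr_sumr; apply: eq_bigr => a _; rewrite !mulr_sumr.
  by apply: eq_bigr => b _; ring.
under eq_bigr => a _ do rewrite sum_ind.
rewrite sum_ind /Hsr.
rewrite mulrACA -invfM -expr2 sqrtCK.
by [].
Qed.

Lemma cons_tE m n (i : 'I_n) (l : m.-tuple 'I_n) :
  @cons_t m.+1 n i l = [tuple of i :: l].
Proof. by apply: val_inj; rewrite /cons_t insubdK //= ; rewrite unfold_in /= size_tuple. Qed.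

Lemma cons_perm m n (i : 'I_n) (l : m.-tuple 'I_n) (q : 'S_m) :
  [tuple of i :: ptup l q] = ptup [tuple of i :: l] (lift_perm ord0 ord0 q).
Proof.
apply: eq_from_tnth => x; rewrite /ptup tnth_mktuple.
case: (unliftP ord0 x) => [y ->|->].
  by rewrite lift_perm_lift !tnthS tnth_mktuple.
by rewrite lift_perm_id !tnth0.
Qed.

Lemma Hsr_eq (C : numClosedFieldType) k n (H : Ak k n -> Ak k n -> C) s t s' t' :
  sr s = sr s' -> sr t = sr t' -> Hsr H s t = Hsr H s' t'.
Proof. by rewrite /Hsr => -> ->. Qed.

Theorem lemma3p3 (C : numClosedFieldType) (k n : nat)
  (hk : (1 < k)%N) (hkn : (k < n - 1)%N)
  (H : Ak k n -> Ak k n -> C) (hH : is_hermitian H) (i j : 'I_n) :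
  piH H i j =
  k%:R^-1 * \sum_(l : Ak k.-1 n | (i \notin val l) && (j \notin val l))
     sgn C (@cons_t k n i (val l)) * sgn C (@cons_t k n j (val l))
     * Hsr H (@cons_t k n i (val l)) (@cons_t k n j (val l)).
Proof.
case: k hk hkn H hH => [//|m] hk hkn H hH /=.
pose F (l : m.-tuple 'I_n) := sgn C (@cons_t m.+1 n i l) * sgn C (@cons_t m.+1 n j l)
     * Hsr H (@cons_t m.+1 n i l) (@cons_t m.+1 n j l).
have Fp l q : F (ptup l q) = F l.
  rewrite /F !cons_tE !cons_perm !sgn_perm.
  rewrite (@Hsr_eq _ _ _ _ _ _ [tuple of i :: l] [tuple of j :: l]);
    try by apply: sr_perm; apply: ptup_perm.
  by rewrite mulrACA -signr_addb addbb expr0 mul1r.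
have Fperm (l l' : m.-tuple 'I_n) : perm_eq l l' -> F l = F l'.
  by move/tuple_permP => [p /val_inj ->]; rewrite Fp.
have F0 (l : m.-tuple 'I_n) : ~~ [&& uniq l, i \notin l & j \notin l] -> F l = 0.
  rewrite /F !cons_tE /sgn /=.
  by case: (uniq l); case: (i \in l); case: (j \in l);
    rewrite ?mulr0 ?mul0r.
pose r := (fun x y : 'I_n => (x <= y)%N).
have rtot : total r by move=> x y; exact: leq_total.
have rtr : transitive r by move=> y x z; exact: leq_trans.
have rasym : antisymmetric r.
  by move=> x y Hxy; apply: val_inj; apply/eqP; rewrite eqn_leq; exact: Hxy.
have Qsorted (l' : m.-tuple 'I_n) : sorted ltn (map val l') -> uniq l' /\ sorted r l'.
  rewrite ltn_sorted_uniq_leq => /andP[u so]; split.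
    by move: u; rewrite (map_inj_uniq val_inj).
  by move: so; rewrite sorted_map.
have key : \sum_(l : m.-tuple 'I_n) F l =
   m`!%:R * \sum_(l : Ak m n | (i \notin val l) && (j \notin val l)) F (val l).
  rewrite (bigID (fun l : m.-tuple 'I_n => [&& uniq l, i \notin l & j \notin l])) /=.
  rewrite [X in _ + X]big1 ?addr0; last by move=> l /F0.
  rewrite (eq_bigr (fun l => F (sort_tuple r l))); last first.
    by move=> l _; apply: Fperm; rewrite perm_sym perm_sort.
  rewrite (partition_big (sort_tuple r)
     (fun l' : m.-tuple 'I_n => [&& sorted ltn (map val l'), i \notin l' & j \notin l'])).
    transitivity (\sum_(l' : m.-tuple 'I_n | [&& sorted ltn (map val l'), i \notin l' & j \notin l'])
       m`!%:R * F l').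
      apply: eq_bigr => l' /and3P[sl' il' jl'].
      have [ul' rl'] := Qsorted l' sl'.
      rewrite (eq_bigr (fun _ => F l')); last by move=> l /andP[_ /eqP ->].
      have e (l : m.-tuple 'I_n) : ([&& uniq l, i \notin l & j \notin l] && (sort_tuple r l == l')) = perm_eq l l'.
        apply/idP/idP.
          by case/andP => _ /eqP <-; rewrite /= perm_sym perm_sort.
        move=> pl; rewrite (perm_uniq pl) !(perm_mem pl) ul' il' jl' /=.
        apply/eqP/val_inj => /=.
        by rewrite (perm_sortP rtot rtr rasym _ _ pl) sorted_sort.
      rewrite (eq_bigl _ _ e) sumr_const mulr_natl.
      congr (_ *+ _).
      have injf : injective (@ptup _ _ l').
        move=> q1 q2 e12; apply/permP => x.
        have := congr1 (fun t => tnth t x) e12; rewrite /ptup !tnth_mktuple.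
        by move/(tuple_uniqP _ ul').
      rewrite -card_Sn -(card_image injf); apply: eq_card => l.
      rewrite [X in X = _]unfold_in -/(perm_eq l l'); apply/idP/imageP.
        by move/tuple_permP => [p /val_inj ->]; exists p.
      by move=> [p _ ->]; apply: ptup_perm.
    rewrite -mulr_sumr; congr (_ * _).
    rewrite (@reindex_omap _ _ _ _ _ (fun x : Ak m n => val x) (fun t : m.-tuple 'I_n => insub t : option (Ak m n))); last first.
      move=> l' /andP[sl' _]; case: insubP => [u _ <-|] //; by rewrite sl'.
    apply: eq_bigl => x; rewrite valK eqxx andbT (valP x).
    done.
  move=> l /and3P[ul il jl]; rewrite /= !mem_sort il jl andbT.
  rewrite ltn_sorted_uniq_leq (map_inj_uniq val_inj) sort_uniq ul /=.
  rewrite sorted_map andbT; exact: (sort_sorted rtot l).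
rewrite /piH /pi1.
transitivity ((\sum_(l : m.-tuple 'I_n) F l) / m.+1`!%:R).
  rewrite mulr_suml; apply: eq_bigr => l _; rewrite AHATE /F.
  by rewrite mulrAC.
rewrite key /F factS natrM.
have h1 : m`!%:R != 0 :> C by rewrite pnatr_eq0 -lt0n fact_gt0.
have h2 : m.+1%:R != 0 :> C by rewrite pnatr_eq0.
by field; rewrite h1 andbT -mulrS pnatr_eq0.
Qed.
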